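(* Let $n\ge 2$ and let $\mathbb{A}=(A_{ij})_{i,j=1}^n$ be an operator matrix as described in the context. Let $T=(T_1,\ldots,T_{n-1}):\mathcal{D}(T_1)\times\cdots\times\mathcal{D}(T_{n-1})\to X_n$, $T(x_1,\dots,x_{n-1})=\sum_j T_jx_j$, where each $T_j:\mathcal{D}(T_j)\subset X_j\to X_n$ is linear and relatively $A_{jj}$-bounded. Assume moreover that $\mathbb{A}_k$ is closed for $k=2,\ldots,n$. If $\sigma(A_{kk})\cup\sigma(\mathbb{A}_k)\ne\mathbb{C}$ for all $k\in\{2,\ldots,n-2\}$, then $T(\lambda-\mathbb{A}_{n-1})^{-1}$ is bounded for every $\lambda\notin\sigma(A_{n-1,n-1})\cup\sigma(\mathbb{A}_{n-1})$. In particular, $T$ is relatively $\mathbb{A}_{n-1}$-bounded if $\sigma(A_{kk})\cup\sigma(\mathbb{A}_k)\ne\mathbb{C}$ for all $k\in\{2,\ldots,n-1\}$.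
   Context: Let $X_1,\ldots,X_n$ be complex Banach spaces and $X=X_1\times\cdots\times X_n$ with norm $\|x\|=\sum_i\|x_i\|_{X_i}$. For $i,j\in\{1,\ldots,n\}$, $A_{ij}:\mathcal{D}(A_{ij})\subset X_j\to X_i$ are linear operators with $A_{ii}$ closed and, for $i\ne j$, $A_{ij}$ relatively $A_{jj}$-bounded (i.e. $\mathcal{D}(A_{jj})\subset\mathcal{D}(A_{ij})$ and there are $\alpha,\beta\ge0$ with $\|A_{ij}x\|\le\alpha\|x\|+\beta\|A_{jj}x\|$ for $x\in\mathcal{D}(A_{jj})$). The operator matrix $\mathbb{A}=(A_{ij})$ acts on $\mathcal{D}(\mathbb{A})=\mathcal{D}(A_{11})\times\cdots\times\mathcal{D}(A_{nn})$ by $(\mathbb{A}x)_i=\sum_jA_{ij}x_j$. For $1\le k\le n$, $\mathbb{A}_k:=(A_{ij})_{i,j=1}^k$ is the upper-left block acting on $X_1\times\cdots\times X_k$ with domain $\mathcal{D}(A_{11})\times\cdots\times\mathcal{D}(A_{kk})$. For a linear operator $S$ on a Banach space $Y$, $\sigma(S)$ is the set of $\lambda$ for which $\lambda-S:\mathcal{D}(S)\to Y$ is not bijective with bounded inverse. Relative boundedness of an operator with respect to a (block) operator is defined analogously. *)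

(* Defs.v *)
From HB Require Import structures.
From mathcomp Require Import all_boot all_order all_algebra.
From mathcomp Require Import all_classical all_reals all_analysis.
From mathcomp Require Import complex.
Set Implicit Arguments. Unset Strict Implicit. Unset Printing Implicit Defensive.
Import Order.TTheory GRing.Theory Num.Theory.
Import numFieldNormedType.Exports.
Local Open Scope classical_set_scope.
Local Open Scope ring_scope.

(* Norms take values in C (as mathcomp-analysis norms on normedModType C do);
   they are real nonnegative, and the order on C restricted to reals is the
   usual one. *)

(* A "normed space skeleton": carrier with subtraction, scalar multiplication
   and norm.  Used uniformly for a single Banach space X_i and for the
   products X_1 x ... x X_k with the sum norm. *)
Record nspace (R : realType) := NSpace {
  ncar :> Type;
  nsub : ncar -> ncar -> ncar;
  nscale : R[i] -> ncar -> ncar;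
  nnorm : ncar -> R[i] }.

(* A (possibly unbounded) operator: a domain and an action (values outside
   the domain are irrelevant). *)
Record op (U V : Type) := Op { dom : set U; app : U -> V }.

Definition tends_to0 (R : realType) (f : nat -> R[i]) : Prop :=
  forall e : R[i], 0 < e -> exists N : nat, forall m : nat, (N <= m)%N -> f m < e.

Definition closed_op (R : realType) (U V : nspace R) (A : op U V) : Prop :=
  forall (u : nat -> U) (x : U) (y : V),
    (forall m, dom A (u m)) ->
    tends_to0 (fun m => nnorm (nsub (u m) x)) ->
    tends_to0 (fun m => nnorm (nsub (app A (u m)) y)) ->
    dom A x /\ app A x = y.

Definition rel_bounded (R : realType) (U V W : nspace R)
    (A : op U V) (B : op U W) : Prop :=
  dom A `<=` dom B /\
  exists a b : R[i], 0 <= a /\ 0 <= b /\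
    forall x, dom A x -> nnorm (app B x) <= a * nnorm x + b * nnorm (app A x).

Definition is_bdd_inverse (R : realType) (U : nspace R) (A : op U U)
    (l : R[i]) (Rv : U -> U) : Prop :=
  (forall y, dom A (Rv y) /\ nsub (nscale l (Rv y)) (app A (Rv y)) = y) /\
  (forall x, dom A x -> Rv (nsub (nscale l x) (app A x)) = x) /\
  (exists c : R[i], forall y, nnorm (Rv y) <= c * nnorm y).

Definition in_resolvent (R : realType) (U : nspace R) (A : op U U)
    (l : R[i]) : Prop :=
  exists Rv : U -> U, is_bdd_inverse A l Rv.

Definition spectrum (R : realType) (U : nspace R) (A : op U U) : set R[i] :=
  [set l | ~ in_resolvent A l].

Definition lin_op (R : realType) (X Y : normedModType R[i]) (A : op X Y) : Prop :=
  dom A 0 /\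
  (forall x y, dom A x -> dom A y -> dom A (x + y)) /\
  (forall (c : R[i]) x, dom A x -> dom A (c *: x)) /\
  (forall (c : R[i]) x y, dom A x -> dom A y ->
     app A (c *: x + y) = c *: app A x + app A y).

Definition nsp_of (R : realType) (X : normedModType R[i]) : nspace R :=
  @NSpace R X (fun a b => a - b) (fun c x => c *: x) (fun x => `|x|).

(* X_0 x ... x X_{k-1} with norm ||x|| = sum_i ||x_i|| (0-based indices). *)
Definition blk (R : realType) (X : nat -> normedModType R[i]) (k : nat) : nspace R :=
  @NSpace R (forall i : 'I_k, X i)
    (fun a b i => a i - b i) (fun c a i => c *: a i)
    (fun a => \sum_(i < k) `|a i|).

Definition blockop (R : realType) (X : nat -> normedModType R[i])
    (A : forall i j : nat, op (X j) (X i)) (k : nat) : op (blk X k) (blk X k) :=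
  @Op (blk X k) (blk X k)
    [set x | forall i : 'I_k, dom (A i i) (x i)]
    (fun x i => \sum_(j < k) app (A i j) (x j)).

Definition rowop (R : realType) (X : nat -> normedModType R[i])
    (Y : normedModType R[i]) (T : forall j : nat, op (X j) Y) (m : nat)
    : op (blk X m) (nsp_of Y) :=
  @Op (blk X m) (nsp_of Y)
    [set x | forall j : 'I_m, dom (T j) (x j)]
    (fun x => \sum_(j < m) app (T j) (x j)).

(* Main.v *)
Require Import Defs.
From HB Require Import structures.
From mathcomp Require Import all_boot all_order all_algebra.
From mathcomp Require Import all_classical all_reals all_analysis.
From mathcomp Require Import complex.
From mathcomp Require Import ring lra.
Import Order.TTheory GRing.Theory Num.Theory.
Import numFieldNormedType.Exports.
Local Open Scope classical_set_scope.
Local Open Scope ring_scope.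
Section Basic.
Local Open Scope complex_scope.
Context {R : realType}.
Implicit Types (a b : R).

Lemma creal_ge0 {e : R[i]} : 0 <= e -> e = (complex.Re e)%:C.
Proof. by move=> /ger0_real/RRe_real ->. Qed.

Lemma cltR a b : (a%:C < b%:C) = (a < b). Proof. exact: ltcR. Qed.
Lemma cleR a b : (a%:C <= b%:C) = (a <= b). Proof. exact: lecR. Qed.

Lemma cpos {e : R[i]} : 0 < e -> 0 < complex.Re e /\ e = (complex.Re e)%:C.
Proof.
move=> he; have e0 := creal_ge0 (e:=e) (ltW he); split => //.
by move: he; rewrite {1}e0 -(cltR 0).
Qed.

Context {V : normedModType R[i]}.
Implicit Types (x y : V).
Definition Nm x : R := complex.Re `|x|.

Lemma nE x : `|x| = (Nm x)%:C.
Proof. exact: (creal_ge0 (normr_ge0 x)). Qed.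

Lemma Nge0 x : 0 <= Nm x.
Proof. by have := normr_ge0 x; rewrite nE lecE /= => /andP[]. Qed.

Lemma ND x y : Nm (x + y) <= Nm x + Nm y.
Proof. by rewrite -cleR rmorphD /= -!nE ler_normD. Qed.

Lemma NN x : Nm (- x) = Nm x.
Proof. by rewrite /Nm normrN. Qed.

Lemma NBC x y : Nm (x - y) = Nm (y - x).
Proof. by rewrite /Nm distrC. Qed.

Lemma N0 : Nm 0 = 0.
Proof. by rewrite /Nm normr0. Qed.

Lemma Neq0 x : Nm x = 0 -> x = 0.
Proof. by move=> h; apply/normr0_eq0; rewrite nE h. Qed.

Lemma NZ (c : R[i]) x : Nm (c *: x) = complex.Re `|c| * Nm x.
Proof. by rewrite {1}/Nm normrZ (creal_ge0 (normr_ge0 c)) (nE x) -rmorphM. Qed.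

Lemma NZr a x : 0 <= a -> Nm (a%:C *: x) = a * Nm x.
Proof. by move=> a0; rewrite NZ ger0_norm ?cleR //. Qed.

Lemma NB x y : Nm (x - y) <= Nm x + Nm y.
Proof. by rewrite -(NN y); apply: ND. Qed.

Lemma Ntri x y z : Nm (x - z) <= Nm (x - y) + Nm (y - z).
Proof. by rewrite (_ : x - z = (x - y) + (y - z)) ?ND // addrA subrK. Qed.

Lemma tendsP (f : nat -> V) :
  tends_to0 (fun m => `|f m|) <->
  (forall e : R, 0 < e -> exists N, forall m, (N <= m)%N -> Nm (f m) < e).
Proof.
split => [h e e0|h e e0].
  have [|N HN] := h e%:C; first by rewrite (cltR 0).
  by exists N => m /HN; rewrite nE cltR.
have [e1 ->] := cpos e0.
have [N HN] := h _ e1; exists N => m /HN; by rewrite nE cltR.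
Qed.

End Basic.
Section GL.
Local Open Scope complex_scope.
Context {R : realType}.

Lemma geo (c e : R) : 0 < e -> exists N : nat, c / 2 ^+ N < e.
Proof.
move=> e0; exists (Num.truncn (c / e)).+1.
have h1 := truncnS_gt (c / e).
have h2 : ((Num.truncn (c / e)).+1%:R : R) <= 2 ^+ (Num.truncn (c / e)).+1.
  by rewrite -natrX ler_nat ltnW // ltn_expl.
have h3 : c / e < 2 ^+ (Num.truncn (c / e)).+1 by apply: lt_le_trans h1 h2.
have p2 : 0 < (2 : R) ^+ (Num.truncn (c / e)).+1 by apply: exprn_gt0.
by rewrite ltr_pdivrMr // mulrC -ltr_pdivrMr.
Qed.


Lemma GL (V : completeNormedModType R[i]) (p : nat -> V) (b : nat -> R) :
  (forall j, Nm (p j.+1 - p j) <= b j) -> (forall j, b j.+1 <= b j / 2) ->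
  exists z, forall m, Nm (z - p m) <= 2 * b m.
Proof.
move=> hp hb.
have hb0 j : 0 <= b j by apply: le_trans (Nge0 _) (hp j).
have hd m k : Nm (p (m + k)%N - p m) <= 2 * b m - 2 * b (m + k)%N.
  elim: k => [|k IH]; first by rewrite addn0 subrr N0 subrr.
  have := Ntri (p (m + k.+1)%N) (p (m + k)%N) (p m).
  have := hp (m + k)%N; have := hb (m + k)%N.
  rewrite addnS; lra.
have hg m k : b (m + k)%N <= b m / 2 ^+ k.
  elim: k => [|k IH]; first by rewrite addn0 expr0 divr1.
  rewrite addnS exprS invfM mulrA.
  have := hb (m + k)%N; have h2 : 0 < (2 : R) ^+ k by apply: exprn_gt0.
  move=> h; apply: le_trans h _.
  rewrite ler_pdivrMr // mulrAC divfK //; by lra.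
have hc : cvg (p @ \oo).
  apply: cauchy_cvg; apply: cauchy_exP => eps eps0.
  have [e0 epsE] := cpos eps0.
  have [N HN] := geo (2 * b 0%N) _ e0.
  exists (p N); exists N => // n /= hn.
  rewrite -ball_normE /ball_ /= nE epsE cltR NBC.
  have := hd N (n - N)%N; rewrite subnKC //.
  have := hg 0%N N; rewrite add0n => h1 h2.
  have := hb0 n; lra.
exists (lim (p @ \oo)) => m.
apply/ler_addgt0Pr => e e0.
have /cvgrPdist_le /(_ e%:C) := hc.
rewrite (cltR 0) => /(_ e0) [N _ HN].
have := HN (m + N)%N (leq_addl _ _); rewrite nE cleR => h1.
have := Ntri (lim (p @ \oo)) (p (m + N)%N) (p m).
have := hd m N; have := hb0 (m + N)%N; lra.
Qed.
End GL.
Section CG.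
Local Open Scope complex_scope.
Context {R : realType}.
Context {U V : completeNormedModType R[i]}.
Variable G : U -> V.
Hypothesis GD : forall x y, G (x + y) = G x + G y.
Hypothesis GZ : forall (c : R[i]) x, G (c *: x) = c *: G x.

Lemma G0 : G 0 = 0.
Proof. by have := GZ 0 0; rewrite !scale0r. Qed.
Lemma GN x : G (- x) = - G x.
Proof. by rewrite -scaleN1r GZ scaleN1r. Qed.
Lemma GB x y : G (x - y) = G x - G y.
Proof. by rewrite GD GN. Qed.

Lemma baire_step :
  exists (k : nat) (x0 : U) (r : R), 0 < r /\
    forall x, Nm (x - x0) < r -> forall eps : R, 0 < eps ->
      exists s, Nm (G s) <= k%:R /\ Nm (x - s) < eps.
Proof.
apply: contrapT => nS.
have H (q : nat * U * R) : exists y : U * R, 0 < q.2 ->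
    Nm (y.1 - q.1.2) < q.2 /\ 0 < y.2 /\
    forall s, Nm (G s) <= q.1.1%:R -> y.2 <= Nm (y.1 - s).
  case: q => [[k x0] r] /=.
  case: (pselect (0 < r)) => r0; last by exists (0, 0) => /r0.
  apply: contrapT => hno; apply: nS; exists k, x0, r; split => // x hx eps heps.
  apply: contrapT => hs; apply: hno; exists (x, eps) => _ /=.
  split => //; split => // s hs1; rewrite leNgt; apply/negP => hlt.
  by apply: hs; exists s.
have [f hf] := choice H.
pose fix sq (k : nat) : U * R :=
  if k is k'.+1 then
    ((f (k', (sq k').1, (sq k').2 / 4)).1,
     Num.min (f (k', (sq k').1, (sq k').2 / 4)).2 ((sq k').2 / 4))
  else (0, 1).
have sqS k : sq k.+1 = ((f (k, (sq k).1, (sq k).2 / 4)).1,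
     Num.min (f (k, (sq k).1, (sq k).2 / 4)).2 ((sq k).2 / 4)) by [].
have spos k : 0 < (sq k).2 /\ (forall s, Nm (G s) <= k%:R -> (sq k.+1).2 <= Nm ((sq k.+1).1 - s))
    /\ Nm ((sq k.+1).1 - (sq k).1) < (sq k).2 / 4 /\ (sq k.+1).2 <= (sq k).2 / 4.
  elim: k => [|k [IH1 _]].
    have := hf (0%N, 0, 1 / 4); rewrite /= => /(_ ltac:(lra)) [h1 [h2 h3]].
    split; first by rewrite /=; lra.
    rewrite ?sqS /=; split; last split => //; last by rewrite ge_min lexx orbT.
    by move=> s /h3; apply: le_trans; rewrite ge_min lexx.
  have q0 : 0 < (sq k.+1).2 / 4.
    rewrite sqS /=; apply: divr_gt0 => //; rewrite lt_min; have := hf (k, (sq k).1, (sq k).2 / 4).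
    rewrite /= => /(_ ltac:(lra)) [h1 [h2 h3]]; apply/andP; split; lra.
  have := hf (k.+1, (sq k.+1).1, (sq k.+1).2 / 4) => /(_ q0) [h1 [h2 h3]].
  split; first by lra.
  rewrite [sq k.+2]sqS /=; split; last split => //; last by rewrite ge_min lexx orbT.
  by move=> s /h3; apply: le_trans; rewrite ge_min lexx.
have hp1 j : Nm ((sq j.+1).1 - (sq j).1) <= (sq j).2 / 4.
  exact: ltW (proj1 (proj2 (proj2 (spos j)))).
have hb1 j : (sq j.+1).2 / 4 <= (sq j).2 / 4 / 2.
  have := proj2 (proj2 (proj2 (spos j))); have := proj1 (spos j); lra.
have [z hz] := @GL _ _ (fun k => (sq k).1) (fun k => (sq k).2 / 4) hp1 hb1.
have big k : k%:R < Nm (G z).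
  rewrite ltNge; apply/negP => /(proj1 (proj2 (spos k))) h.
  have := hz k.+1; have := proj1 (spos k.+1); rewrite NBC; lra.
have := big (Num.truncn (Nm (G z))).+1.
by rewrite ltNge (ltW (truncnS_gt _)).
Qed.

Definition tz (f : nat -> R) :=
  forall e : R, 0 < e -> exists N, forall m, (N <= m)%N -> f m < e.

Lemma tz_geo (c : R) (f : nat -> R) : 0 <= c -> (forall m, f m <= c / 2 ^+ m) -> tz f.
Proof.
move=> c0 hf e e0; have [N HN] := geo c _ e0; exists N => m hm.
apply: le_lt_trans (hf m) _; apply: le_lt_trans HN.
apply: ler_wpM2l => //; rewrite lef_pV2 ?posrE ?exprn_gt0 //.
by rewrite ler_eXn2l // ?ltr1n.
Qed.

Hypothesis Gcl : forall (u : nat -> U) x w,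
  tz (fun m => Nm (u m - x)) -> tz (fun m => Nm (G (u m) - w)) -> G x = w.

Lemma CG : exists c : R, 0 <= c /\ forall x, Nm (G x) <= c * Nm x.
Proof.
have [k [x0 [r [r0 Hb]]]] := baire_step.
have S2 y : Nm y < r -> forall eps : R, 0 < eps ->
    exists s, Nm (G s) <= 2 * k%:R /\ Nm (y - s) < eps.
  move=> hy eps e0.
  have e2 : 0 < eps / 2 by lra.
  have hx1 : Nm (x0 + y - x0) < r by rewrite addrC addKr.
  have hx2 : Nm (x0 - x0) < r by rewrite subrr N0.
  have [s1 [h11 h12]] := Hb _ hx1 _ e2.
  have [s2 [h21 h22]] := Hb _ hx2 _ e2.
  exists (s1 - s2); split.
    rewrite GB; have := NB (G s1) (G s2); lra.
  have -> : y - (s1 - s2) = (x0 + y - s1) - (x0 - s2).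
    by rewrite -(addrA x0) (addrC x0) addrKA opprD !opprK addrA.
  have := NB (x0 + y - s1) (x0 - s2); lra.
have S3 (t : R) y : 0 < t -> Nm y < t * r -> forall eps : R, 0 < eps ->
    exists s, Nm (G s) <= 2 * k%:R * t /\ Nm (y - s) < eps.
  move=> t0 hy eps e0.
  have ti : 0 <= t^-1 by rewrite invr_ge0 ltW.
  have [||s [h1 h2]] := S2 (t^-1%:C *: y) _ (eps / t).
  - by rewrite NZr // mulrC ltr_pdivrMr // mulrC.
  - exact: divr_gt0.
  exists (t%:C *: s); split.
    by rewrite GZ (NZr _ _ (ltW t0)) mulrC ler_pM2r.
  have -> : y - t%:C *: s = t%:C *: (t^-1%:C *: y - s).
    rewrite scalerBr scalerA -rmorphM mulfV ?gt_eqF // scale1r //.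
  by rewrite (NZr _ _ (ltW t0)) mulrC -ltr_pdivlMr.
have S4 y : Nm y < r -> Nm (G y) <= 4 * k%:R.
  move=> hy.
  have H (q : nat * U) : exists d : U, Nm q.2 < r / 2 ^+ q.1 ->
      Nm (G d) <= 2 * k%:R / 2 ^+ q.1 /\ Nm (q.2 - d) < r / 2 ^+ q.1.+1.
    case: q => j e /=; case: (pselect (Nm e < r / 2 ^+ j)) => he; last by exists 0.
    have t0 : 0 < ((2 : R) ^+ j)^-1 by rewrite invr_gt0 exprn_gt0.
    have he' : Nm e < (2 ^+ j)^-1 * r by rewrite mulrC.
    have e0 : 0 < r / 2 ^+ j.+1 by rewrite divr_gt0 // exprn_gt0.
    by have [s [h1 h2]] := S3 _ _ t0 he' _ e0; exists s.
  have [fd hfd] := choice H.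
  pose fix e (j : nat) : U := if j is j'.+1 then e j' - fd (j', e j') else y.
  have eS j : e j.+1 = e j - fd (j, e j) by [].
  have he j : Nm (e j) < r / 2 ^+ j.
    elim: j => [|j IH]; first by rewrite expr0 divr1.
    by rewrite eS; have [_ ] := hfd (j, e j) IH.
  have hq j : Nm (G (y - e j.+1) - G (y - e j)) <= 2 * k%:R / 2 ^+ j.
    rewrite -GB eS opprB (addrC y) addrKA opprK subrK.
    by have [] := hfd (j, e j) (he j).
  have hb j : 2 * k%:R / 2 ^+ j.+1 <= 2 * k%:R / 2 ^+ j / 2 :> R.
    by rewrite exprSr invfM mulrA.
  have [w hw] := @GL _ _ (fun j => G (y - e j)) (fun j => 2 * k%:R / 2 ^+ j) hq hb.
  have Gyw : G y = w.
    apply: (Gcl (fun m => y - e m)).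
      apply: (@tz_geo r) => [|m]; first exact: ltW.
      by rewrite addrAC subrr add0r NN; apply: ltW.
    apply: (@tz_geo (4 * k%:R)) => [|m]; first by rewrite mulr_ge0.
    rewrite NBC; apply: le_trans (hw m) _; rewrite !mulrA; lra.
  have := hw 0%N; rewrite /= subrr G0 subr0 -Gyw expr0 divr1; lra.
exists (8 * k%:R / r); split; first by rewrite divr_ge0 ?mulr_ge0 // ltW.
move=> x; case: (pselect (Nm x = 0)) => hx0.
  by rewrite (Neq0 _ hx0) G0 N0 N0 mulr0.
have xp : 0 < Nm x by rewrite lt_neqAle eq_sym Nge0 andbT; apply/eqP.
have t0 : 0 <= r / (2 * Nm x) by rewrite divr_ge0 ?mulr_ge0 // ltW.
have hy : Nm ((r / (2 * Nm x))%:C *: x) < r.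
  rewrite NZr //; have -> : r / (2 * Nm x) * Nm x = r / 2 by field; rewrite gt_eqF.
  lra.
have := S4 _ hy; rewrite GZ NZr // => h.
have h2 := ler_wpM2l (ltW (mulr_gt0 (ltr0n _ 2) xp)) h.
have e1 : 2 * Nm x * (r / (2 * Nm x) * Nm (G x)) = r * Nm (G x).
  by field; apply/eqP => hh; move: xp; rewrite /Nm hh ltxx.
rewrite e1 in h2.
rewrite mulrAC ler_pdivlMr // mulrC; lra.
Qed.
End CG.
Section Main.
Local Open Scope complex_scope.
Context {R : realType}.
Variable m : nat.
Variable X : nat -> completeNormedModType R[i].
Local Notation XX := (fun j : nat => (X j : normedModType R[i])).
Local Notation Yt := (blk XX m).

Definition E (i0 : 'I_m) (x : X i0) : forall i : 'I_m, X i :=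
  fun i => match PeanoNat.Nat.eq_dec i0 i with
           | left e => eq_rect (nat_of_ord i0) (fun k => X k) x (nat_of_ord i) e
           | right _ => 0 end.

Lemma E_at (y : Yt) (i0 : 'I_m) :
  E i0 (y i0) = fun i => if i == i0 then y i else 0.
Proof.
apply: functional_extensionality_dep => i; rewrite /E.
case: PeanoNat.Nat.eq_dec => [e|ne].
  have ii : i0 = i by apply: ord_inj.
  subst i; rewrite eqxx (Eqdep_dec.UIP_refl_nat _ e) //.
case: eqP => // ii; subst i; by case: ne.
Qed.

Lemma E_lin (i0 : 'I_m) (c : R[i]) (x x' : X i0) :
  E i0 (c *: x + x') = fun i => c *: E i0 x i + E i0 x' i.
Proof.
apply: functional_extensionality_dep => i; rewrite /E.
case: PeanoNat.Nat.eq_dec => [e|ne]; last by rewrite scaler0 addr0.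
by move: (nat_of_ord i) e => k e; case: k / e.
Qed.

Definition nN (y : Yt) : R := \sum_(i < m) Nm (y i).

Lemma nnE (y : Yt) : nnorm y = (nN y)%:C.
Proof. by rewrite /= /nN rmorph_sum; apply: eq_bigr => i _; rewrite nE. Qed.

Lemma nN_ge0 y : 0 <= nN y.
Proof. by apply: sumr_ge0 => i _; apply: Nge0. Qed.

Lemma Nm_le_nN (y : Yt) j : Nm (y j) <= nN y.
Proof. by rewrite /nN (bigD1 j) //= lerDl sumr_ge0 // => i _; apply: Nge0. Qed.

Lemma nN_E (i0 : 'I_m) (x : X i0) : nN (E i0 x) = Nm x.
Proof.
rewrite /nN (bigD1 i0) //= big1 ?addr0.
  by rewrite /E; case: PeanoNat.Nat.eq_dec => // e; rewrite (Eqdep_dec.UIP_refl_nat _ e).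
move=> i ne; rewrite /E; case: PeanoNat.Nat.eq_dec => [e|_]; last exact: N0.
by case/eqP: ne; apply: ord_inj.
Qed.


Lemma lin_app0 (U W : normedModType R[i]) (B : op U W) : lin_op B -> app B 0 = 0.
Proof.
case=> d0 [_ [_ hl]]; have := hl (-1) 0 0 d0 d0.
by rewrite scaler0 add0r scaleN1r addNr.
Qed.

Variable Y : completeNormedModType R[i].
Variable A : forall i j : nat, op (X j) (X i).
Variable T : forall j : nat, op (X j) Y.
Hypothesis hAlin : forall i j, (i < m)%N -> (j < m)%N -> lin_op (A i j).
Hypothesis hAcl : forall i, (i < m)%N ->
  closed_op (U := nsp_of (X i)) (V := nsp_of (X i)) (A i i).
Hypothesis hAdom : forall i j, (i < m)%N -> (j < m)%N -> dom (A j j) `<=` dom (A i j).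
Hypothesis hTrel : forall j, (j < m)%N ->
  rel_bounded (U := nsp_of (X j)) (V := nsp_of (X j)) (W := nsp_of Y) (A j j) (T j).

Variable l : R[i].
Variable Rv : Yt -> Yt.
Hypothesis hRv : is_bdd_inverse (blockop A m) l Rv.

Lemma modalg (V : lmodType R[i]) (c : R[i]) (r1 r2 s1 s2 : V) :
  l *: (c *: r1 + r2) - (c *: s1 + s2) = c *: (l *: r1 - s1) + (l *: r2 - s2).
Proof. by rewrite scalerDr scalerBr !scalerA mulrC opprD addrACA. Qed.

Lemma Rv_lin (c : R[i]) (y1 y2 : Yt) :
  Rv (fun i => c *: y1 i + y2 i) = fun i => c *: Rv y1 i + Rv y2 i.
Proof.
case: hRv => H1 [H2 _].
set z : Yt := fun i => c *: Rv y1 i + Rv y2 i.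
have dz : dom (blockop A m) z.
  move=> i; have [_ [hD [hZ _]]] := hAlin _ _ (ltn_ord i) (ltn_ord i).
  by apply: hD; [apply: hZ; apply: (H1 y1).1 | apply: (H1 y2).1].
rewrite -(H2 z dz); congr Rv.
apply: functional_extensionality_dep => i /=.
have e1 := f_equal (fun f => f i) (H1 y1).2.
have e2 := f_equal (fun f => f i) (H1 y2).2.
rewrite /= in e1 e2; rewrite -e1 -e2 /z -modalg; congr (_ - _).
rewrite scaler_sumr -big_split /=; apply: eq_bigr => j _.
have [_ [_ [_ hL]]] := hAlin _ _ (ltn_ord i) (ltn_ord j).
rewrite hL //; apply: (hAdom _ _ (ltn_ord i) (ltn_ord j)).
  exact: (H1 y1).1.
exact: (H1 y2).1.
Qed.

Lemma Rv0 : Rv (fun i => 0) = fun i => 0.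
Proof.
have := Rv_lin (-1) (fun i => 0) (fun i => 0).
have -> : (fun i : 'I_m => (-1) *: (0 : X i) + 0) = (fun i => 0).
  by apply: functional_extensionality_dep => i; rewrite scaler0 addr0.
move=> ->; apply: functional_extensionality_dep => i.
by rewrite scaleN1r addNr.
Qed.

Lemma dom_Rv y (j : 'I_m) : dom (A j j) (Rv y j).
Proof. by case: hRv => H1 _; apply: (H1 y).1. Qed.

Lemma Rv_bound : exists cR : R, 0 <= cR /\ forall y, nN (Rv y) <= cR * nN y.
Proof.
case: hRv => _ [_ [c hc]]; exists (Num.max (complex.Re c) 0); split.
  by rewrite le_max lexx orbT.
move=> y; have := hc y; rewrite !nnE.
case: c hc => a b hc; rewrite lecE /= => /andP[_ h].
apply: le_trans h _; rewrite mulr0 subr0; apply: ler_wpM2r; first exact: nN_ge0.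
by rewrite le_max lexx.
Qed.


Definition Gf (i0 j : 'I_m) (x : X i0) : X j := app (A j j) (Rv (E i0 x) j).

Lemma applin (i j : 'I_m) (c : R[i]) u v : dom (A j j) u -> dom (A j j) v ->
  app (A i j) (c *: u + v) = c *: app (A i j) u + app (A i j) v.
Proof.
move=> hu hv; have [_ [_ [_ hL]]] := hAlin _ _ (ltn_ord i) (ltn_ord j).
by apply: hL; apply: (hAdom _ _ (ltn_ord i) (ltn_ord j)).
Qed.

Lemma Gf_lin i0 j c x x' : Gf i0 j (c *: x + x') = c *: Gf i0 j x + Gf i0 j x'.
Proof. by rewrite /Gf E_lin Rv_lin applin //; apply: dom_Rv. Qed.

Lemma lin_DZ (U W : lmodType R[i]) (G : U -> W) :
  (forall c x x', G (c *: x + x') = c *: G x + G x') ->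
  (forall x y, G (x + y) = G x + G y) /\ (forall c x, G (c *: x) = c *: G x).
Proof.
move=> hG; have G0 : G 0 = 0.
  by have := hG (-1) 0 0; rewrite scaler0 addr0 scaleN1r addNr.
split => [x y|c x]; first by have := hG 1 x y; rewrite !scale1r.
by rewrite -(addr0 (c *: x)) hG G0 addr0.
Qed.

Lemma tz_scale (f g : nat -> R) (K : R) : 0 <= K -> tz g ->
  (forall k, f k <= K * g k) -> tz f.
Proof.
move=> K0 hg hf e e0.
have [N HN] := hg (e / (K + 1)) (divr_gt0 e0 (ltr_wpDl K0 ltr01)).
exists N => k hk; apply: le_lt_trans (hf k) _.
have := HN k hk; rewrite ltr_pdivlMr ?(ltr_wpDl K0 ltr01) // => h.
case: (lerP 0 (g k)) => g0.
  apply: le_lt_trans h; rewrite mulrC ler_wpM2l //; lra.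
apply: le_lt_trans e0; rewrite mulr_ge0_le0 //; exact: ltW.
Qed.

Lemma Gf_closed (i0 j : 'I_m) (u : nat -> X i0) x w :
  tz (fun k => Nm (u k - x)) -> tz (fun k => Nm (Gf i0 j (u k) - w)) -> Gf i0 j x = w.
Proof.
move=> hu hw; have [cR [cR0 hcR]] := Rv_bound.
have hcl := hAcl _ (ltn_ord j).
have [] := hcl (fun k => Rv (E i0 (u k)) j) (Rv (E i0 x) j) w (fun k => dom_Rv _ j).
- apply: (proj2 (tendsP (fun k => Rv (E i0 (u k)) j - Rv (E i0 x) j))).
  change (tz (fun k => Nm (Rv (E i0 (u k)) j - Rv (E i0 x) j))).
  apply: (@tz_scale _ _ cR cR0 hu) => k.
  have -> : Rv (E i0 (u k)) j - Rv (E i0 x) j = Rv (E i0 (-1 *: x + u k)) j.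
    by rewrite E_lin Rv_lin scaleN1r addrC.
  apply: le_trans (Nm_le_nN _ j) _; apply: le_trans (hcR _) _.
  by rewrite nN_E scaleN1r addrC.
- exact: (proj2 (tendsP (fun k => Gf i0 j (u k) - w)) hw).
- by [].
Qed.

Lemma Gf_bound : exists C : R, 0 <= C /\ forall i0 j x, Nm (Gf i0 j x) <= C * Nm x.
Proof.
have H (p : 'I_m * 'I_m) : exists c : R, 0 <= c /\ forall x, Nm (Gf p.1 p.2 x) <= c * Nm x.
  have [GD GZ] := @lin_DZ _ _ (Gf p.1 p.2) (@Gf_lin p.1 p.2).
  exact: (@CG _ _ _ (Gf p.1 p.2) GD GZ (@Gf_closed p.1 p.2)).
have [cf hcf] := choice H.
exists (\sum_p cf p); split; first by apply: sumr_ge0 => p _; case: (hcf p).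
move=> i0 j x; apply: le_trans ((hcf (i0, j)).2 x) _.
apply: ler_wpM2r; first exact: Nge0.
rewrite (bigD1 (i0, j)) //= lerDl sumr_ge0 // => p _; by case: (hcf p).
Qed.

Definition trL (s : seq 'I_m) (y : Yt) : Yt := fun i => if i \in s then y i else 0.

Lemma trL_dec (j : 'I_m) s y : uniq s ->
  app (A j j) (Rv (trL s y) j) = \sum_(i0 <- s) Gf i0 j (y i0).
Proof.
elim: s => [|a s IH] /=.
  have -> : trL [::] y = fun i => 0 by apply: functional_extensionality_dep => i.
  by rewrite Rv0 big_nil lin_app0 //; apply: hAlin.
move=> /andP[anot us].
have -> : trL (a :: s) y = fun i => 1 *: E a (y a) i + trL s y i.
  apply: functional_extensionality_dep => i; rewrite E_at scale1r /trL in_cons.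
  case: (eqVneq i a) => [->|ne] /=; first by rewrite (negbTE anot) addr0.
  by rewrite add0r.
rewrite Rv_lin big_cons -IH // applin ?scale1r //; apply: dom_Rv.
Qed.

Lemma trL_all y : trL (index_enum 'I_m) y = y.
Proof. by apply: functional_extensionality_dep => i; rewrite /trL mem_index_enum. Qed.

Lemma N_sum (V : normedModType R[i]) (I : Type) (s : seq I) (F : I -> V) :
  Nm (\sum_(i <- s) F i) <= \sum_(i <- s) Nm (F i).
Proof.
elim: s => [|a s IH]; first by rewrite !big_nil N0.
rewrite !big_cons; apply: le_trans (ND _ _) _; exact: lerD.
Qed.

Lemma A_bound : exists C : R, 0 <= C /\
  forall y (j : 'I_m), Nm (app (A j j) (Rv y j)) <= C * nN y.
Proof.
have [C [C0 hC]] := Gf_bound; exists C; split => // y j.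
rewrite -{1}(trL_all y) trL_dec ?index_enum_uniq //.
apply: le_trans (N_sum _ _ _ _) _; rewrite /nN mulr_sumr; apply: ler_sum => i _.
exact: hC.
Qed.

Lemma convR (u v w : R) (a b : R[i]) : 0 <= a -> 0 <= b ->
  u%:C <= a * v%:C + b * w%:C -> u <= complex.Re a * v + complex.Re b * w.
Proof.
move=> a0 b0; rewrite {1}(creal_ge0 a0) {1}(creal_ge0 b0).
by rewrite -!rmorphM -rmorphD cleR.
Qed.

Lemma Re_ge0 (a : R[i]) : 0 <= a -> 0 <= complex.Re a.
Proof. by move=> a0; rewrite -cleR -creal_ge0. Qed.

Lemma part1core : exists K : R, 0 <= K /\
  forall y, Nm (app (rowop T m) (Rv y)) <= K * nN y.
Proof.
have [cR [cR0 hcR]] := Rv_bound; have [C [C0 hC]] := A_bound.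
have H (j : 'I_m) : exists ab : R * R, 0 <= ab.1 /\ 0 <= ab.2 /\
    forall x, dom (A j j) x ->
      Nm (app (T j) x) <= ab.1 * Nm x + ab.2 * Nm (app (A j j) x).
  have [_ [a [b [a0 [b0 hab]]]]] := hTrel _ (ltn_ord j).
  exists (complex.Re a, complex.Re b) => /=; split; first exact: Re_ge0.
  split; first exact: Re_ge0.
  move=> x /hab /=; rewrite !nE; exact: convR.
have [ab hab] := choice H.
exists (\sum_(j < m) ((ab j).1 * cR + (ab j).2 * C)); split.
  by apply: sumr_ge0 => j _; case: (hab j) => h1 [h2 _]; rewrite addr_ge0 ?mulr_ge0.
move=> y; rewrite /= mulr_suml.
apply: le_trans (N_sum _ _ _ _) _; apply: ler_sum => j _.
case: (hab j) => h1 [h2 h3].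
apply: le_trans (h3 _ (dom_Rv y j)) _.
rewrite mulrDl -!mulrA; apply: lerD; apply: ler_wpM2l => //.
all: first [exact: hC | exact: le_trans (Nm_le_nN _ j) (hcR y)].
Qed.


Lemma ab_choice : exists ab : 'I_m -> R * R, forall j, 0 <= (ab j).1 /\ 0 <= (ab j).2 /\
    forall x, dom (A j j) x ->
      Nm (app (T j) x) <= (ab j).1 * Nm x + (ab j).2 * Nm (app (A j j) x).
Proof.
have H (j : 'I_m) : exists ab : R * R, 0 <= ab.1 /\ 0 <= ab.2 /\
    forall x, dom (A j j) x ->
      Nm (app (T j) x) <= ab.1 * Nm x + ab.2 * Nm (app (A j j) x).
  have [_ [a [b [a0 [b0 hab]]]]] := hTrel _ (ltn_ord j).
  exists (complex.Re a, complex.Re b) => /=; split; first exact: Re_ge0.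
  split; first exact: Re_ge0.
  move=> x /hab /=; rewrite !nE; exact: convR.
by have [ab hab] := choice H; exists ab.
Qed.

Lemma part2small : (m <= 1)%N -> exists a b : R, 0 <= a /\ 0 <= b /\
  forall x : Yt, dom (blockop A m) x ->
    Nm (app (rowop T m) x) <= a * nN x + b * nN (app (blockop A m) x).
Proof.
move=> hm1; have [ab hab] := ab_choice.
exists (\sum_(j < m) (ab j).1), (\sum_(j < m) (ab j).2); split.
  by apply: sumr_ge0 => j _; case: (hab j).
split; first by apply: sumr_ge0 => j _; case: (hab j) => _ [].
move=> x hx; rewrite /= !mulr_suml -big_split /=.
apply: le_trans (N_sum _ _ _ _) _; apply: ler_sum => j _.
case: (hab j) => h1 [h2 h3].
apply: le_trans (h3 _ (hx j)) _.
apply: lerD; apply: ler_wpM2l => //; first exact: Nm_le_nN.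
have -> : app (A j j) (x j) = app (blockop A m) x j.
  rewrite /= (bigD1 j) //= big1 ?addr0 // => k hk.
  case/eqP: hk; apply: ord_inj.
  have k0 : nat_of_ord k = 0%N.
    by apply/eqP; rewrite -leqn0 -ltnS (leq_trans (ltn_ord k) hm1).
  have j0 : nat_of_ord j = 0%N.
    by apply/eqP; rewrite -leqn0 -ltnS (leq_trans (ltn_ord j) hm1).
  by rewrite k0 j0.
exact: Nm_le_nN.
Qed.

End Main.

Theorem lemma3p5 (R : realType) (n : nat) (hn : (2 <= n)%N)
  (X : nat -> completeNormedModType R[i])
  (A : forall i j : nat, op (X j) (X i))
  (T : forall j : nat, op (X j) (X n.-1))
  (hAlin : forall i j : nat, (i < n)%N -> (j < n)%N -> lin_op (A i j))
  (hAclosed : forall i : nat, (i < n)%N ->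
      closed_op (U := nsp_of (X i)) (V := nsp_of (X i)) (A i i))
  (hArel : forall i j : nat, (i < n)%N -> (j < n)%N -> i <> j ->
      rel_bounded (U := nsp_of (X j)) (V := nsp_of (X j)) (W := nsp_of (X i))
        (A j j) (A i j))
  (hTlin : forall j : nat, (j < n.-1)%N -> lin_op (T j))
  (hTrel : forall j : nat, (j < n.-1)%N ->
      rel_bounded (U := nsp_of (X j)) (V := nsp_of (X j)) (W := nsp_of (X n.-1))
        (A j j) (T j))
  (hblkclosed : forall k : nat, (2 <= k <= n)%N -> closed_op (blockop A k)) :
  ((forall k : nat, (2 <= k <= n.-2)%N ->
      spectrum (U := nsp_of (X k.-1)) (A k.-1 k.-1) `|` spectrum (blockop A k)
        <> [set: R[i]]) ->
   forall l : R[i],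
     ~ (spectrum (U := nsp_of (X n.-2)) (A n.-2 n.-2) l \/
        spectrum (blockop A n.-1) l) ->
     forall Rv : blk (fun j : nat => (X j : normedModType R[i])) n.-1 -> blk (fun j : nat => (X j : normedModType R[i])) n.-1,
       is_bdd_inverse (blockop A n.-1) l Rv ->
       exists c : R[i], forall y : blk (fun j : nat => (X j : normedModType R[i])) n.-1,
         nnorm (app (rowop T n.-1) (Rv y)) <= c * nnorm y)
  /\
  ((forall k : nat, (2 <= k <= n.-1)%N ->
      spectrum (U := nsp_of (X k.-1)) (A k.-1 k.-1) `|` spectrum (blockop A k)
        <> [set: R[i]]) ->
   rel_bounded (blockop A n.-1) (rowop T n.-1)).
Proof.
have hlt i : (i < n.-1)%N -> (i < n)%N.
  by move=> hi; apply: leq_trans hi (leq_pred n).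
have hAlin' i j : (i < n.-1)%N -> (j < n.-1)%N -> lin_op (A i j).
  by move=> hi hj; apply: hAlin; apply: hlt.
have hAcl' i : (i < n.-1)%N -> closed_op (U := nsp_of (X i)) (V := nsp_of (X i)) (A i i).
  by move=> hi; apply: hAclosed; apply: hlt.
have hAdom' i j : (i < n.-1)%N -> (j < n.-1)%N -> dom (A j j) `<=` dom (A i j).
  move=> hi hj; case: (eqVneq i j) => [->//|ne].
  have ne' : i <> j by apply/eqP.
  by have [] := hArel i j (hlt _ hi) (hlt _ hj) ne'.
split.
  move=> _ l _ Rv hRv.
  have [K [K0 hK]] := @part1core _ _ _ _ _ _ hAlin' hAcl' hAdom' hTrel _ _ hRv.
  exists (K%:C)%C => y; rewrite nnE /= nE -rmorphM cleR; exact: hK.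
move=> hsp; split.
  by move=> x hx j; apply: (hTrel _ (ltn_ord j)).1; apply: hx.
case: (leqP n.-1 1) => hm.
  have [a [b [a0 [b0 hab]]]] := @part2small _ _ _ _ _ _ hTrel hm.
  exists (a%:C)%C, (b%:C)%C; split; first by rewrite cleR.
  split; first by rewrite cleR.
  move=> x hx; rewrite !nnE /= nE -!rmorphM -rmorphD cleR; exact: hab.
have [mu hmu] : exists mu, ~ (spectrum (U := nsp_of (X n.-2)) (A n.-2 n.-2) mu \/
    spectrum (blockop A n.-1) mu).
  apply: contrapT => hno; apply: (hsp n.-1).
    by rewrite hm leqnn.
  apply/seteqP; split => // z _; apply: contrapT => hz; apply: hno; exists z.
  move=> hz'; apply: hz; rewrite -(prednK (ltnW hm)) /=.
  by rewrite (prednK (ltnW hm)).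
have [Rv hRv] : in_resolvent (blockop A n.-1) mu.
  by apply: contrapT => hno; apply: hmu; right.
have [K [K0 hK]] := @part1core _ _ _ _ _ _ hAlin' hAcl' hAdom' hTrel _ _ hRv.
exists ((K * complex.Re `|mu|)%:C)%C, (K%:C)%C; split.
  by rewrite cleR mulr_ge0 // Re_ge0.
split; first by rewrite cleR.
move=> x hx; rewrite !nnE /= nE -!rmorphM -rmorphD cleR.
case: hRv => _ [H2 _]; rewrite -{1}(H2 x hx).
apply: le_trans (hK _) _.
rewrite -mulrA -mulrDr; apply: ler_wpM2l => //.
rewrite /nN mulr_sumr -big_split /=; apply: ler_sum => i _.
by apply: le_trans (NB _ _) _; rewrite NZ.
Qed.
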